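(* There is a universal constant $C>0$ such that for every domain $\mathcal{X}$, every $n\ge1$, every $\varepsilon>0$, every pair of distributions $P,Q$ on $\mathcal{X}$, and every $\varepsilon$-differentially private algorithm $M:\mathcal{X}^n\to\{P,Q\}$, $$\left|\Pr_{X\sim P^n}[M(X)=P]-\Pr_{X\sim Q^n}[M(X)=P]\right|\le C\cdot W_{d_{\varepsilon}}(P,Q).$$
   Context: Data sets $X,Y\in\mathcal{X}^n$ are neighbors if they differ in at most one entry; a randomized $M$ is $\varepsilon$-differentially private if $\Pr[M(X)\in S]\le e^{\varepsilon}\Pr[M(Y)\in S]$ for all neighbors $X,Y$ and all events $S$. $d_H(X,Y)=|\{i:x_i\ne y_i\}|$ is Hamming distance and $d_{\varepsilon}(X,Y)=\min\{\varepsilon d_H(X,Y),1\}$. For a metric $d$ on $\mathcal{X}^n$, $W_d(P,Q)=\inf_\rho\mathbb{E}_{(X,Y)\sim\rho}[d(X,Y)]$, the infimum over all couplings $\rho$ of $P^n$ and $Q^n$. Probabilities are over the samples and the randomness of $M$. *)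

(* Defs.v *)
From HB Require Import structures.
From mathcomp Require Import all_boot all_order all_algebra.
From mathcomp Require Import all_classical all_reals all_analysis.
Set Implicit Arguments. Unset Strict Implicit. Unset Printing Implicit Defensive.
Import Order.TTheory GRing.Theory Num.Theory.
Local Open Scope classical_set_scope.
Local Open Scope ring_scope.

Definition hamming {T : Type} {n : nat} (x y : n.-tuple T) : nat :=
  (\sum_(i < n) `[< tnth x i <> tnth y i >])%N.

Definition neighbors {T : Type} {n : nat} (x y : n.-tuple T) : Prop :=
  (hamming x y <= 1)%N.

Definition d_eps {R : realType} {T : Type} {n : nat} (eps : R)
  (x y : n.-tuple T) : R :=
  Num.min (eps * (hamming x y)%:R) 1.

(* A randomized algorithm M : X^n -> {P, Q} is a probability kernel from
   X^n to bool, the output [true] standing for "P" and [false] for "Q". *)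
Definition eps_DP {R : realType} {d : measure_display} {X : measurableType d}
  {n : nat} (eps : R) (M : R.-pker (n.-tuple X) ~> bool) : Prop :=
  forall (x y : n.-tuple X), neighbors x y ->
  forall S : set bool, (M x S <= (expR eps)%:E * M y S)%E.

Definition is_product_measure {R : realType} {d : measure_display}
  {X : measurableType d} {n : nat} (P : probability X R)
  (Pn : probability (n.-tuple X) R) : Prop :=
  forall A : 'I_n -> set X, (forall i, measurable (A i)) ->
  Pn [set x | forall i, A i (tnth x i)] = (\prod_(i < n) P (A i))%E.

Definition is_coupling {R : realType} {d : measure_display}
  {X : measurableType d} {n : nat} (Pn Qn : probability (n.-tuple X) R)
  (rho : probability (n.-tuple X * n.-tuple X)%type R) : Prop :=
  (forall A, measurable A -> rho (A `*` setT) = Pn A) /\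
  (forall B, measurable B -> rho (setT `*` B) = Qn B).

Definition wasserstein_deps {R : realType} {d : measure_display}
  {X : measurableType d} {n : nat} (eps : R)
  (Pn Qn : probability (n.-tuple X) R) : \bar R :=
  ereal_inf [set (\int[rho]_z (d_eps eps z.1 z.2)%:E)%E
            | rho in [set rho | is_coupling Pn Qn rho]].

(* Main.v *)
Require Import Defs.
From HB Require Import structures.
From mathcomp Require Import all_boot all_order all_algebra.
From mathcomp Require Import all_classical all_reals all_analysis.
From mathcomp Require Import lra measurable_realfun.
Import Order.TTheory GRing.Theory Num.Theory.
Local Open Scope classical_set_scope.
Local Open Scope ring_scope.
Lemma key_real (R : realType) (a b t : R) : 0 <= a <= 1 -> 0 <= b <= 1 -> 0 <= t ->
  a <= expR t * b -> b <= expR t * a -> `|a - b| <= 2 * Num.min t 1.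
Proof.
move=> /andP[a0 a1] /andP[b0 b1] t0 ab ba.
have E1 : 1 <= expR t by rewrite -expR0 ler_expR.
have E0 : expR t * (1 - t) <= 1.
  have h := expR_ge1Dx (- t).
  rewrite expRN in h.
  have Ep : 0 < expR t := expR_gt0 t.
  have := ler_wpM2l (ltW Ep) h.
  by rewrite mulfV // gt_eqF.
have [t1|t1] := leP t (1/2).
  have -> : Num.min t 1 = t by apply/min_idPl; lra.
  have : a - b <= 2 * t /\ b - a <= 2 * t.
    split; nra.
  move=> [h1 h2]; rewrite ler_norml; apply/andP; split; lra.
have : Num.min t 1 >= 1/2.
  by rewrite le_min; apply/andP; split; lra.
move=> hm; rewrite ler_norml; apply/andP; split; lra.
Qed.
Lemma hamming_sym {T : Type} {n : nat} (x y : n.-tuple T) : hamming x y = hamming y x.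
Proof.
rewrite /hamming; apply: eq_bigr => i _.
by congr nat_of_bool; apply/asbool_equiv_eq; split => h e; apply: h.
Qed.

Lemma hamming0 {T : Type} {n : nat} {x y : n.-tuple T} : hamming x y = 0%N -> x = y.
Proof.
move=> h; apply: eq_from_tnth => i.
apply: contrapT => hi.
have : (0 < hamming x y)%N.
  rewrite /hamming (bigD1 i) //= asboolT //.
by rewrite h.
Qed.

Lemma hamming_step {T : Type} {n : nat} {x y : n.-tuple T} {k} :
  hamming x y = k.+1 -> exists z, neighbors x z /\ hamming z y = k.
Proof.
move=> h.
have [i hi] : exists i, tnth x i <> tnth y i.
  apply: contrapT => nh.
  have : hamming x y = 0%N.
    rewrite /hamming big1 // => j _; rewrite asboolF // => e; apply: nh; by exists j.
  by rewrite h.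
pose z := [tuple if j == i then tnth y j else tnth x j | j < n].
have tz j : tnth z j = if j == i then tnth y j else tnth x j by rewrite tnth_mktuple.
exists z; split.
  rewrite /neighbors /hamming (bigD1 i) //= big1 ?addn0 ?leq_b1 // => j ji.
  by rewrite asboolF // tz (negbTE ji).
move: h; rewrite /hamming (bigD1 i) //= asboolT // add1n => -[<-].
rewrite (bigD1 i) //= tz eqxx asboolF // add0n.
apply: eq_bigr => j ji; by rewrite tz (negbTE ji).
Qed.

Lemma chain (R : realType) {T : Type} {n : nat} (eps : R) (f : n.-tuple T -> R) :
  0 <= eps -> (forall x, 0 <= f x) ->
  (forall x y, neighbors x y -> f x <= expR eps * f y) ->
  forall k x y, hamming x y = k -> f x <= expR (eps * k%:R) * f y.
Proof.
move=> e0 f0 hf; elim=> [|k IH] x y h.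
  by rewrite (hamming0 h) mulr0 expR0 mul1r.
have [z [xz zy]] := hamming_step h.
apply: (le_trans (hf _ _ xz)).
rewrite mulrSr mulrDr mulr1 expRD (mulrC (expR (eps * _))) -mulrA.
apply: ler_wpM2l; first exact: expR_ge0.
exact: IH.
Qed.
Lemma measurable_deps (R : realType) (d : measure_display) (X : measurableType d) (n : nat) (eps : R) :
  measurable [set z : X * X | z.1 = z.2] ->
  measurable_fun [set: n.-tuple X * n.-tuple X] (fun z => d_eps eps z.1 z.2).
Proof.
move=> mdiag.
pose A (i : 'I_n) := [set z : n.-tuple X * n.-tuple X | tnth z.1 i <> tnth z.2 i].
have mA i : measurable (A i).
  have mp : measurable_fun [set: n.-tuple X * n.-tuple X]
      (fun z => (tnth z.1 i, tnth z.2 i)).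
    apply: measurable_fun_pair.
      exact: (measurableT_comp (measurable_tnth i) measurable_fst).
    exact: (measurableT_comp (measurable_tnth i) measurable_snd).
  have := mp measurableT _ (measurableC mdiag).
  rewrite setTI; congr measurable.
have eqh : (fun z : n.-tuple X * n.-tuple X => ((hamming z.1 z.2)%:R : R)) =
    (fun z => \sum_(i <- enum 'I_n) (\1_(A i) z : R)).
  apply: funext => z; rewrite /hamming natr_sum big_enum /=.
  apply: eq_bigr => i _; rewrite indicE; congr (_%:R).
rewrite /d_eps.
apply: (@measurable_realfun.measurable_minr _ _ _ _ (fun z => eps * (hamming z.1 z.2)%:R) (cst 1)).
  apply: measurable_realfun.measurable_funM; first exact: measurable_cst.
  rewrite eqh; apply: measurable_sum => i; exact: measurable_realfun.measurable_indic.
exact: measurable_cst.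
Qed.

Lemma integrable01 d (T : measurableType d) (R : realType) (mu : probability T R)
  (g : T -> \bar R) : measurable_fun setT g -> (forall x, 0 <= g x <= 1)%E ->
  mu.-integrable setT g.
Proof.
move=> mg g01; apply/integrableP; split => //.
have h : (\int[mu]_(x in setT) `|g x| <= \int[mu]_(x in setT) (cst 1%E) x)%E.
  apply: ge0_le_integral => //.
  - exact: measurableT_comp.
  - by move=> x _; have /andP[h1 h2] := g01 x; rewrite gee0_abs.
move: h; rewrite integral_cst // => h; apply: (le_lt_trans h); rewrite mul1e.
have := @probability_setT _ _ _ mu => /= ->.
exact: ltry.
Qed.

Theorem lemma3p2 (R : realType) :
  exists C : R, 0 < C /\
  forall (d : measure_display) (X : measurableType d),
  measurable [set z : X * X | z.1 = z.2] ->
  forall (n : nat), (1 <= n)%N ->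
  forall (eps : R), 0 < eps ->
  forall (P Q : probability X R)
         (Pn Qn : probability (n.-tuple X) R),
  is_product_measure P Pn -> is_product_measure Q Qn ->
  forall M : R.-pker (n.-tuple X) ~> bool, eps_DP eps M ->
  (`| \int[Pn]_x M x [set true] - \int[Qn]_x M x [set true] |
     <= C%:E * wasserstein_deps eps Pn Qn)%E.
Proof.
exists 2; split; first by [].
move=> d X mdiag n n1 eps eps0 P Q Pn Qn hP hQ M hM.
set F := fun x => M x [set true].
have mT : measurable [set true] by [].
have mF : measurable_fun setT F := measurable_kernel M _ mT.
have F0 x : (0 <= F x)%E by exact: measure_ge0.
have F1 x : (F x <= 1)%E.
  rewrite -(@prob_kernel _ _ _ _ _ M x); apply: le_measure => //; rewrite inE //.
have Ffin x : F x \is a fin_num.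
  by rewrite ge0_fin_numE // (le_lt_trans (F1 x)) // ltey.
pose f x := fine (F x).
have Ff x : F x = (f x)%:E by rewrite fineK.
have f01 x : 0 <= f x <= 1 by rewrite -!lee_fin -Ff F0 F1.
have f0 x : 0 <= f x by have /andP[] := f01 x.
have dp x y : neighbors x y -> f x <= expR eps * f y.
  move=> nxy; have := hM x y nxy [set true].
  by rewrite -/(F x) -/(F y) !Ff -EFinM lee_fin.
have pt x y : `|f x - f y| <= 2 * d_eps eps x y.
  have k0 : 0 <= eps * (hamming x y)%:R by apply: mulr_ge0; [exact: ltW|exact: ler0n].
  apply: key_real => //.
    exact: (@chain _ _ _ _ _ (ltW eps0) f0 dp _ x y (erefl _)).
  have := @chain _ _ _ _ _ (ltW eps0) f0 dp _ y x (erefl _).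
  by rewrite hamming_sym.
have mFf : measurable_fun setT (fun z : n.-tuple X * n.-tuple X => F z.1).
  exact: (measurableT_comp mF measurable_fst).
have mFs : measurable_fun setT (fun z : n.-tuple X * n.-tuple X => F z.2).
  exact: (measurableT_comp mF measurable_snd).
have md := @measurable_deps R d X n eps mdiag.
have key : forall rho, is_coupling Pn Qn rho ->
  (`| \int[Pn]_x F x - \int[Qn]_x F x | <=
     2%:E * \int[rho]_z (d_eps eps z.1 z.2)%:E)%E.
  move=> rho [hA hB].
  have e1 : (\int[Pn]_x F x = \int[rho]_z F z.1)%E.
    rewrite (eq_measure_integral (pushforward rho fst)); last first.
      move=> A mA _ /=; rewrite -(hA A mA); congr (rho _).
      by apply/seteqP; split => z /=; [move=> [] //| move=> Az; split].
    rewrite (@ge0_integral_pushforward _ _ _ _ _ fst measurable_fst rho setT F measurableT mF (fun y _ => F0 y)).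
    by rewrite preimage_setT.
  have e2 : (\int[Qn]_x F x = \int[rho]_z F z.2)%E.
    rewrite (eq_measure_integral (pushforward rho snd)); last first.
      move=> A mA _ /=; rewrite -(hB A mA); congr (rho _).
      by apply/seteqP; split => z /=; [move=> [] //| move=> Az; split].
    rewrite (@ge0_integral_pushforward _ _ _ _ _ snd measurable_snd rho setT F measurableT mF (fun y _ => F0 y)).
    by rewrite preimage_setT.
  have i1 : rho.-integrable setT (fun z => F z.1).
    by apply: integrable01 => // z; rewrite F0 F1.
  have i2 : rho.-integrable setT (fun z => F z.2).
    by apply: integrable01 => // z; rewrite F0 F1.
  rewrite e1 e2 -integralB //.
  apply: (le_trans (le_abse_integral _ _ _)) => //.
    exact: emeasurable_funB.
  rewrite -ge0_integralZl_EFin //; last first.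
    - exact/measurable_EFinP.
    - by move=> z _; rewrite lee_fin /d_eps le_min; apply/andP; split => //; apply: mulr_ge0; [exact: ltW|exact: ler0n].
  apply: ge0_le_integral => //.
  - exact: measurableT_comp (emeasurable_funB mFf mFs).
  - apply: measurable_funeM; exact/measurable_EFinP.
  - by move=> z _; rewrite !Ff -EFinB -EFinM /= lee_fin.
rewrite /wasserstein_deps -lee_pdivrMl //.
apply: le_ereal_inf_tmp => v [rho hrho <-].
by rewrite lee_pdivrMl //; exact: key.
Qed.
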